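(* Let $(S,M)$ be a Coxeter matrix, $L_S$ a weight function, $e=\{s_+,s_-\}$ with $m_{s_+,s_-}=3$, and $(S/e,N)$ the edge contraction with the induced weight function $L_{S/e}$. Then there is an $\mathcal A$-algebra homomorphism $\phi_v:H_{S/e}\to H_S$ such that $\phi_v(T'_s)=T_s$ for all $s\in S/e$, $s\ne s_0$, and $\phi_v(T'_{s_0})=T_{s_+}T_{s_-}T_{s_+}^{-1}$.
   Context: $\mathcal A=\mathbb Z[v,v^{-1}]$. A Coxeter matrix on $S$ is a symmetric matrix $M=(m_{s,s'})$ with entries in $\mathbb Z_{\ge1}\sqcup\{\infty\}$, $m_{s,s'}=1$ iff $s=s'$; $W_{S,M}$ is the associated Coxeter group. A weight function is a map $L_S:S\to\mathbb Z$ with $L_S(s)=L_S(s')$ whenever $s,s'$ are conjugate in $W_{S,M}$; put $v_s=v^{L_S(s)}$. The Hecke algebra $H_S$ is the associative unital $\mathcal A$-algebra generated by $T_s$ ($s\in S$) with relations $(T_s-v_s)(T_s+v_s^{-1})=0$ for all $s$, and $T_sT_{s'}T_s\cdots=T_{s'}T_sT_{s'}\cdots$ (both sides with $m_{s,s'}$ factors) for all $s\ne s'$ with $m_{s,s'}\ne\infty$. (In particular each $T_s$ is invertible.) Edge contraction: $e=\{s_+,s_-\}\subseteq S$ with $m_{s_+,s_-}=3$; $S/e=(S\setminus\{s_+,s_-\})\sqcup\{s_0\}$; $N=(n_{s,s'})$ with $n_{s,s}=1$, $n_{s,s'}=m_{s,s'}$ for distinct $s,s'\ne s_0$, and for $s\neq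 s_0$: $n_{s,s_0}=n_{s_0,s}=m_{s,s_+}+m_{s,s_-}-2$ if $m_{s,s_+}=2$ or $m_{s,s_-}=2$ (with $\infty+k=\infty$), and $=\infty$ if both are $>2$. The induced weight function is $L_{S/e}(s_0)=L_S(s_+)$ and $L_{S/e}(s)=L_S(s)$ for $s\ne s_0$ (note $s_+,s_-$ are conjugate so $L_S(s_+)=L_S(s_-)$). $H_{S/e}$ is the Hecke algebra of $(S/e,N,L_{S/e})$, with generators denoted $T'_s$, $s\in S/e$. *)

(* Defs.v *)
From HB Require Import structures.
From mathcomp Require Import all_boot all_order all_algebra.
Set Implicit Arguments. Unset Strict Implicit. Unset Printing Implicit Defensive.
Import GRing.Theory.
Local Open Scope ring_scope.

(* Coxeter matrix entries: [Some k] = k, [None] = infinity. *)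
Definition cox_entry := option nat.

Record coxeter_matrix (S : eqType) (m : S -> S -> cox_entry) : Prop := {
  cm_sym : forall s s', m s s' = m s' s;
  cm_one : forall s s', m s s' = Some 1%N <-> s = s';
  cm_pos : forall s s', m s s' <> Some 0%N }.

Definition alt (S : Type) (s s' : S) (n : nat) : seq S :=
  mkseq (fun i => if odd i then s' else s) n.

(* The Coxeter group W_{S,M}: words in S modulo the congruence generated by
   s s = 1 and the braid relations (a presentation as a monoid, which is the
   group since generators are involutions). *)
Inductive cox_eq (S : eqType) (m : S -> S -> cox_entry) : seq S -> seq S -> Prop :=
| ce_refl w : cox_eq m w w
| ce_sym w w' : cox_eq m w w' -> cox_eq m w' w
| ce_trans w1 w2 w3 : cox_eq m w1 w2 -> cox_eq m w2 w3 -> cox_eq m w1 w3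
| ce_cat w1 w1' w2 w2' : cox_eq m w1 w1' -> cox_eq m w2 w2' ->
    cox_eq m (w1 ++ w2) (w1' ++ w2')
| ce_sq s : cox_eq m [:: s; s] [::]
| ce_braid s s' n : s != s' -> m s s' = Some n ->
    cox_eq m (alt s s' n) (alt s' s n).

(* s and s' are conjugate in W: s' = w s w^{-1}, with w^{-1} = rev w. *)
Definition cox_conj (S : eqType) (m : S -> S -> cox_entry) (s s' : S) : Prop :=
  exists w : seq S, cox_eq m (w ++ s :: rev w) [:: s'].

Definition weight_function (S : eqType) (m : S -> S -> cox_entry) (L : S -> int) :=
  forall s s', cox_conj m s s' -> L s = L s'.

(* An A = Z[v,v^-1]-algebra is encoded as a ring R with a central unit v
   (with inverse vi): this is exactly a ring morphism Z[v,v^-1] -> Z(R). *)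
Definition is_Aalg (R : pzRingType) (v vi : R) : Prop :=
  [/\ v * vi = 1, vi * v = 1 & forall x, v * x = x * v].

Definition vpow (R : pzRingType) (v vi : R) (k : int) : R :=
  match k with Posz n => v ^+ n | Negz n => vi ^+ n.+1 end.

Definition hecke_rel (S : eqType) (m : S -> S -> cox_entry) (L : S -> int)
  (R : pzRingType) (v vi : R) (T : S -> R) : Prop :=
  (forall s, (T s - vpow v vi (L s)) * (T s + vpow v vi (- L s)) = 0) /\
  (forall s s' n, s != s' -> m s s' = Some n ->
     \prod_(x <- alt s s' n) T x = \prod_(x <- alt s' s n) T x).

(* (H, v, vi, T) is the Hecke algebra H_S of (S, m, L): the A-algebra
   presented by generators T s and the Hecke relations (universal property). *)
Definition is_hecke_algebra (S : eqType) (m : S -> S -> cox_entry) (L : S -> int)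
  (H : pzRingType) (v vi : H) (T : S -> H) : Prop :=
  [/\ is_Aalg v vi, hecke_rel m L v vi T &
   forall (B : pzRingType) (w wi : B) (U : S -> B),
     is_Aalg w wi -> hecke_rel m L w wi U ->
     exists f : {rmorphism H -> B},
       [/\ f v = w, (forall s, f (T s) = U s) &
        forall g : {rmorphism H -> B}, g v = w -> (forall s, g (T s) = U s) ->
          forall x, g x = f x]].

(* Edge contraction. S/e = option {s | s <> s+, s <> s-}, None = s0. *)
Definition contr_set (S : eqType) (sp sm : S) : eqType :=
  option {s : S | (s != sp) && (s != sm)}.

Definition oadd2 (x y : cox_entry) : cox_entry :=
  match x, y with Some a, Some b => Some (a + b - 2)%N | _, _ => None end.

Definition contr_entry (x y : cox_entry) : cox_entry :=
  if (x == Some 2%N) || (y == Some 2%N) then oadd2 x y else None.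

Definition contr_matrix (S : eqType) (m : S -> S -> cox_entry) (sp sm : S)
  (a b : contr_set sp sm) : cox_entry :=
  match a, b with
  | Some a, Some b => m (val a) (val b)
  | None, None => Some 1%N
  | Some a, None => contr_entry (m (val a) sp) (m (val a) sm)
  | None, Some b => contr_entry (m (val b) sp) (m (val b) sm)
  end.

Definition contr_weight (S : eqType) (L : S -> int) (sp sm : S)
  (a : contr_set sp sm) : int :=
  match a with Some a => L (val a) | None => L sp end.

(* Main.v *)
Require Import Defs.
From HB Require Import structures.
From mathcomp Require Import all_boot all_order all_algebra.
Import GRing.Theory.
Local Open Scope ring_scope.

Lemma alt_map (A B : Type) (f : A -> B) s s' n : map f (alt s s' n) = alt (f s) (f s') n.
Proof. rewrite /alt /mkseq -map_comp; apply eq_map => i /=; by case: odd. Qed.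

Lemma prod_conj (R : pzRingType) (y yi : R) (s : seq R) : yi*y = 1 -> y*yi = 1 ->
  \prod_(x <- map (fun x => y*x*yi) s) x = y * (\prod_(x <- s) x) * yi.
Proof.
move=> h1 h2; elim: s => [|x s IH]; first by rewrite !big_nil mulr1.
rewrite !big_cons IH !mulrA -(mulrA _ yi y) h1 mulr1; done.
Qed.

Lemma conj_alt (R : pzRingType) (y yi c t : R) n : yi*y = 1 -> y*yi = 1 -> t*y = y*t ->
  \prod_(x <- alt t (y*c*yi) n) x = y * (\prod_(x <- alt t c n) x) * yi /\
  \prod_(x <- alt (y*c*yi) t n) x = y * (\prod_(x <- alt c t n) x) * yi.
Proof.
move=> h1 h2 ht.
have gt : y*t*yi = t by rewrite -ht -mulrA h2 mulr1.
split; rewrite -prod_conj // alt_map gt //.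
Qed.

Lemma conj_quad (R : pzRingType) (y yi c q q' : R) : yi*y = 1 -> y*yi = 1 ->
  q*y = y*q -> q'*y = y*q' ->
  (y*c*yi - q)*(y*c*yi + q') = y*((c-q)*(c+q'))*yi.
Proof.
move=> h1 h2 hq hq'.
have E : forall d, d*y = y*d -> y*(c+d)*yi = y*c*yi + d.
  by move=> d hd; rewrite mulrDr mulrDl -hd -(mulrA d) h2 mulr1.
rewrite -E //; last by rewrite mulNr hq mulrN.
rewrite -E // .
idtac.
rewrite !mulrA -(mulrA _ yi y) h1 mulr1 -!mulrA. done.
Qed.

Lemma vpow_inv (R : pzRingType) (v vi : R) k : is_Aalg v vi ->
  vpow v vi k * vpow v vi (- k) = 1.
Proof.
case=> h1 h2 _.
have P : forall (a b : R), a * b = 1 -> forall n, a ^+ n * b ^+ n = 1.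
  move=> a b hab; elim=> [|n IH]; first by rewrite !expr0 mulr1.
  by rewrite exprS exprSr mulrA -(mulrA a) IH mulr1.
case: k => [[|n]|n] /=; first by rewrite mulr1.
  by apply: P.
by apply: P.
Qed.

Lemma vpow_central (R : pzRingType) (v vi : R) k x : is_Aalg v vi ->
  vpow v vi k * x = x * vpow v vi k.
Proof.
case=> h1 h2 hc.
have hci : forall x, vi * x = x * vi.
  move=> y; by rewrite -[LHS]mulr1 -h1 mulrA -(mulrA vi) -hc mulrA h2 mul1r.
case: k => n /=; apply/esym; apply: commrX; rewrite /GRing.comm ?hc ?hci //.
Qed.

Lemma hecke_inv (S : eqType) (m : S -> S -> cox_entry) (L : S -> int) (R : pzRingType)
  (v vi : R) (T : S -> R) s : is_Aalg v vi -> hecke_rel m L v vi T ->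
  exists ti, ti * T s = 1 /\ T s * ti = 1.
Proof.
move=> HA [Hq _].
set q := vpow v vi (L s); set q' := vpow v vi (- L s).
have qq : q * q' = 1 by apply: vpow_inv.
have cq : q * T s = T s * q by apply: vpow_central.
have cq' : q' * T s = T s * q' by apply: vpow_central.
have E := Hq s; rewrite -/q -/q' mulrBl !mulrDr qq in E; move: (subr0_eq E); rewrite cq => {}E.
exists (T s + q' - q); split.
  by rewrite mulrBl mulrDl cq cq' E [_ + 1]addrC addrK.
by rewrite mulrBr mulrDr E [_ + 1]addrC addrK.
Qed.

Theorem mainTheorem5 (S : eqType) (m : S -> S -> cox_entry) (L : S -> int)
  (sp sm : S)
  (Hm : coxeter_matrix m) (HL : weight_function m L)
  (He : m sp sm = Some 3%N)
  (H : pzRingType) (v vi : H) (T : S -> H)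
  (HH : is_hecke_algebra m L v vi T)
  (H' : pzRingType) (v' vi' : H') (T' : contr_set sp sm -> H')
  (HH' : is_hecke_algebra (@contr_matrix S m sp sm) (@contr_weight S L sp sm) v' vi' T') :
  exists phi : {rmorphism H' -> H},
    [/\ phi v' = v,
        (forall s : {s : S | (s != sp) && (s != sm)}, phi (T' (Some s)) = T (val s)) &
        exists Tinv : H, [/\ Tinv * T sp = 1, T sp * Tinv = 1 &
                             phi (T' None) = T sp * T sm * Tinv]].
Proof.
case: HH => HA [Hq Hb] _.
case: HH' => _ _ Huniv.
have neq : sp != sm.
  apply/eqP => e; move: He; rewrite e ((cm_one Hm sm sm).2 erefl) //.
have PT : forall s s' n, \prod_(x <- alt s s' n) T x = \prod_(x <- alt (T s) (T s') n) x.
  by move=> s s' n; rewrite -alt_map big_map.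
have [ai [ai1 ai2]] := @hecke_inv S m L H v vi T sp HA (conj Hq Hb).
have [bi [bi1 bi2]] := @hecke_inv S m L H v vi T sm HA (conj Hq Hb).
have aba : T sp * T sm * T sp = T sm * T sp * T sm.
  by have := Hb sp sm 3%N neq He; rewrite /alt /= !big_cons big_nil !mulr1 !mulrA.
have X : T sp * T sm * ai = bi * T sp * T sm.
  transitivity (bi * (T sm * T sp * T sm) * ai).
    by rewrite !mulrA bi1 mul1r.
  by rewrite -aba !mulrA -(mulrA _ (T sp) ai) ai2 mulr1.
pose U (x : contr_set sp sm) : H := if x is Some s then T (val s) else T sp * T sm * ai.
have PU : forall s s' n, \prod_(x <- alt s s' n) U x = \prod_(x <- alt (U s) (U s') n) x.
  by move=> s s' n; rewrite -alt_map big_map.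
have KEY : forall (t : {s : S | (s != sp) && (s != sm)}) n,
    contr_entry (m (val t) sp) (m (val t) sm) = Some n ->
    \prod_(x <- alt (T (val t)) (T sp * T sm * ai) n) x =
    \prod_(x <- alt (T sp * T sm * ai) (T (val t)) n) x.
  move=> t n; have /andP[tp tm] := valP t; rewrite /contr_entry.
  case E1: (m (val t) sp == Some 2%N) => /=.
    move/eqP: E1 => E1.
    have c : T (val t) * T sp = T sp * T (val t).
      by have := Hb _ _ 2%N tp E1; rewrite /alt /= !big_cons big_nil !mulr1.
    rewrite E1 /=; case E2: (m (val t) sm) => [k|] //= [<-].
    rewrite addKn.
    have [-> ->] := @conj_alt _ (T sp) ai (T sm) (T (val t)) k ai1 ai2 c.
    by rewrite -!PT Hb.
  case E2: (m (val t) sm == Some 2%N) => //=.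
  move/eqP: E2 => E2.
  have c : T (val t) * T sm = T sm * T (val t).
    by have := Hb _ _ 2%N tm E2; rewrite /alt /= !big_cons big_nil !mulr1.
  have cb : T (val t) * bi = bi * T (val t).
    rewrite -[T _ * bi]mul1r -bi1 -!mulrA (mulrA (T sm)) -c -!mulrA bi2 mulr1 //.
  rewrite E2; case E3: (m (val t) sp) => [k|] //= [<-].
  rewrite addnK X.
  have [-> ->] := @conj_alt _ bi (T sm) (T sp) (T (val t)) k bi2 bi1 cb.
  by rewrite -!PT Hb.
have HU : hecke_rel (@contr_matrix S m sp sm) (@contr_weight S L sp sm) v vi U.
  split.
    case => [s|] /=; first exact: Hq.
    rewrite X (@conj_quad _ bi (T sm) (T sp) _ _ bi2 bi1) ?Hq ?mulr0 ?mul0r //; exact: vpow_central.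
  move=> [s|] [s'|] n hne; rewrite /= => hm.
  - rewrite !PU /= -!PT; apply: Hb hm.
    apply/negP => /eqP/val_inj E; move: hne; rewrite E eqxx //.
  - by rewrite !PU; exact: KEY.
  - by rewrite !PU; symmetry; exact: KEY.
  - by rewrite eqxx in hne.
have [f [fv fT _]] := Huniv H v vi U HA HU.
exists f; split; [done | move=> s; exact: (fT (Some s)) | ].
by exists ai; split => //; rewrite (fT None).
Qed.
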